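(* For every $h\ge1$, $\mathsf{sumPI}(\mathrm{MAJ}_h)=\mathsf{maxPI}(\mathrm{MAJ}_h)=2^h$.
   Context: $\mathrm{MAJ}_h:\{0,1\}^{3^h}\to\{0,1\}$ is the recursive majority of three function: the function computed by a complete ternary tree of depth $h$ whose internal nodes are majority-of-three gates and whose leaves are the input bits. For $f:\{0,1\}^N\to\{0,1\}$, with $p=\{p_x\}$ ranging over families of probability distributions on $[N]$, $$\mathsf{sumPI}(f)=\min_{p}\ \max_{x,y:\ f(x)\neq f(y)} \frac{1}{\sum_{i:\,x_i\neq y_i}\sqrt{p_x(i)p_y(i)}},\qquad \mathsf{maxPI}(f)=\min_{p}\ \max_{x,y:\ f(x)\neq f(y)} \frac{1}{\max_{i:\,x_i\neq y_i}\sqrt{p_x(i)p_y(i)}}.$$ *)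

(* Defs.v *)
From HB Require Import structures.
From mathcomp Require Import all_boot all_order all_algebra.
From mathcomp Require Import boolp classical_sets reals constructive_ereal ereal.
Set Implicit Arguments. Unset Strict Implicit. Unset Printing Implicit Defensive.
Import Order.TTheory GRing.Theory Num.Theory.
Local Open Scope ring_scope.

Definition maj3 (a b c : bool) : bool := [|| a && b, b && c | a && c].

(* Recursive majority on the 3^h consecutive bits x off, ..., x (off + 3^h - 1):
   complete ternary tree of depth h, children of a node cover consecutive blocks. *)
Fixpoint maj_rec (h : nat) (x : nat -> bool) (off : nat) : bool :=
  match h with
  | 0 => x off
  | h'.+1 => maj3 (maj_rec h' x off) (maj_rec h' x (off + 3 ^ h')%N)
                  (maj_rec h' x (off + 2 * 3 ^ h')%N)
  end.

Definition MAJ (h : nat) (x : {ffun 'I_(3 ^ h) -> bool}) : bool :=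
  maj_rec h (fun n => if insub n is Some i then x i else false) 0.

Section PI.
Variables (R : realType) (N : nat).
Notation input := {ffun 'I_N -> bool}.

Definition distr_family (p : input -> 'I_N -> R) : Prop :=
  forall x, (forall i, 0 <= p x i) /\ \sum_(i < N) p x i = 1.

Definition sum_overlap (p : input -> 'I_N -> R) (x y : input) : R :=
  \sum_(i < N | x i != y i) Num.sqrt (p x i * p y i).

Definition max_overlap (p : input -> 'I_N -> R) (x y : input) : R :=
  \big[Num.max/0]_(i < N | x i != y i) Num.sqrt (p x i * p y i).

(* 1/s as an extended real, with 1/0 = +oo *)
Definition inv_e (s : R) : \bar R := if s == 0 then +oo%E else (s^-1)%:E.

Definition pi_cost (ov : (input -> 'I_N -> R) -> input -> input -> R)
  (f : input -> bool) (p : input -> 'I_N -> R) : \bar R :=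
  ereal_sup [set v | exists x y, f x != f y /\ v = inv_e (ov p x y)].

Definition sumPI (f : input -> bool) : \bar R :=
  ereal_inf [set pi_cost sum_overlap f p | p in distr_family].

Definition maxPI (f : input -> bool) : \bar R :=
  ereal_inf [set pi_cost max_overlap f p | p in distr_family].
End PI.

(* Main.v *)
Require Import Defs.
From HB Require Import structures.
From mathcomp Require Import all_boot all_order all_algebra.
From mathcomp Require Import boolp classical_sets reals constructive_ereal ereal.
From mathcomp Require Import zify ring lra.
Import Order.TTheory GRing.Theory Num.Theory.

Definition flip (x : nat -> bool) (j : nat) := fun n => if n == j then ~~ x n else x n.

Lemma maj_rec_loc h x y off : (forall n, off <= n < off + 3^h -> x n = y n) ->
  maj_rec h x off = maj_rec h y off.
Proof.
elim: h off => [|h IH] off H /=.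
  by apply: H; rewrite expn0; lia.
rewrite expnS in H.
by congr maj3; apply: IH => n Hn; apply: H; lia.
Qed.

Fixpoint hardr h x off : bool :=
  match h with
  | 0 => true
  | h'.+1 => [&& hardr h' x off, hardr h' x (off + 3^h'), hardr h' x (off + 2*3^h') &
       ~~ ((maj_rec h' x off == maj_rec h' x (off+3^h')) &&
           (maj_rec h' x (off + 3^h') == maj_rec h' x (off+2*3^h')))]
  end.

Lemma hardr_loc h x y off : (forall n, off <= n < off + 3^h -> x n = y n) ->
  hardr h x off = hardr h y off.
Proof.
elim: h off => [|h IH] off H //=.
rewrite expnS in H.
have H0 : forall n, off <= n < off + 3^h -> x n = y n by move=> n Hn; apply: H; lia.
have H1 : forall n, off + 3^h <= n < off + 3^h + 3^h -> x n = y n by move=> n Hn; apply: H; lia.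
have H2 : forall n, off + 2 * 3^h <= n < off + 2 * 3^h + 3^h -> x n = y n by move=> n Hn; apply: H; lia.
by rewrite (IH _ H0) (IH _ H1) (IH _ H2) (maj_rec_loc _ _ _ _ H0) (maj_rec_loc _ _ _ _ H1) (maj_rec_loc _ _ _ _ H2).
Qed.

Lemma flip_maj_out h x j off : ~~ (off <= j < off + 3^h) ->
  maj_rec h (flip x j) off = maj_rec h x off.
Proof.
move=> Hj; apply: maj_rec_loc => n Hn; rewrite /flip.
by case: eqP => // E; subst; rewrite Hn in Hj.
Qed.

Lemma flip_hard_out h x j off : ~~ (off <= j < off + 3^h) ->
  hardr h (flip x j) off = hardr h x off.
Proof.
move=> Hj; apply: hardr_loc => n Hn; rewrite /flip.
by case: eqP => // E; subst; rewrite Hn in Hj.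
Qed.

Arguments flip_maj_out {h x j off}.
Arguments flip_hard_out {h x j off}.
Lemma maj3_ch0 a a' b c : (maj3 a' b c != maj3 a b c) = (a' != a) && (b != c).
Proof. by case: a a' b c => [] [] [] []. Qed.
Lemma maj3_ch1 a b b' c : (maj3 a b' c != maj3 a b c) = (b' != b) && (a != c).
Proof. by case: a b b' c => [] [] [] []. Qed.
Lemma maj3_ch2 a b c c' : (maj3 a b c' != maj3 a b c) = (c' != c) && (a != b).
Proof. by case: a b c c' => [] [] [] []. Qed.

Lemma sens_hard h x off j : hardr h x off -> maj_rec h (flip x j) off != maj_rec h x off ->
  hardr h (flip x j) off.
Proof.
elim: h off => [|h IH] off //= /and4P [Ha Hb Hc Hn].
set a := maj_rec h x off; set b := maj_rec h x (off + 3^h); set c := maj_rec h x (off + 2 * 3^h).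
case: (ltnP j (off + 3^h)) => Hj1.
  have E1 : ~~ (off + 3^h <= j < off + 3^h + 3^h) by lia.
  have E2 : ~~ (off + 2 * 3^h <= j < off + 2* 3^h + 3^h) by lia.
  rewrite (flip_maj_out E1) (flip_maj_out E2) (flip_hard_out E1) (flip_hard_out E2) -/a -/b -/c maj3_ch0 => /andP [ch bc].
  by rewrite IH //= Hb Hc (negbTE bc) andbF.
case: (ltnP j (off + 2 * 3^h)) => Hj2.
  have E1 : ~~ (off <= j < off + 3^h) by lia.
  have E2 : ~~ (off + 2 * 3^h <= j < off + 2* 3^h + 3^h) by lia.
  rewrite (flip_maj_out E1) (flip_maj_out E2) (flip_hard_out E1) (flip_hard_out E2) -/a -/b -/c maj3_ch1 => /andP [ch bc].
  rewrite IH //= Ha Hc /=; apply/negP => /andP [/eqP e1 /eqP e2]; by rewrite e1 e2 eqxx in bc.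
have E1 : ~~ (off <= j < off + 3^h) by lia.
have E2 : ~~ (off + 3^h <= j < off + 3^h + 3^h) by lia.
rewrite (flip_maj_out E1) (flip_maj_out E2) (flip_hard_out E1) (flip_hard_out E2) -/a -/b -/c maj3_ch2 => /andP [ch bc].
by rewrite IH //= Ha Hb (negbTE bc).
Qed.

Lemma sum_andb_l m n (b : bool) (t : nat -> bool) :
  \sum_(m <= j < n) (b && t j : nat) = b * \sum_(m <= j < n) (t j : nat).
Proof. by case: b => /=; [rewrite mul1n | rewrite big1 // mul0n]. Qed.

Lemma sens_count h x off : hardr h x off ->
  \sum_(off <= j < off + 3^h) (maj_rec h (flip x j) off != maj_rec h x off : nat) = 2^h.
Proof.
elim: h off => [|h IH] off.
  by rewrite expn0 addn1 big_nat1 /= /flip eqxx; case: (x off).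
move=> /= /and4P [Ha Hb Hc Hn].
rewrite (@big_cat_nat _ _ _ (off + 3^h)) /=; [|lia|rewrite expnS; lia].
rewrite (@big_cat_nat _ _ _ (off + 2 * 3^h) (off + 3^h)) /=; [|lia|rewrite expnS; lia].
set a := maj_rec h x off; set b := maj_rec h x (off + 3^h); set c := maj_rec h x (off + 2 * 3^h).
rewrite (@eq_big_nat _ _ _ off (off + 3^h) _
   (fun j => ((b != c) && (maj_rec h (flip x j) off != maj_rec h x off) : nat))); last first.
  move=> j Hj.
  have E1 : ~~ (off + 3^h <= j < off + 3^h + 3^h) by lia.
  have E2 : ~~ (off + 2 * 3^h <= j < off + 2* 3^h + 3^h) by lia.
  by rewrite (flip_maj_out E1) (flip_maj_out E2) maj3_ch0 andbC.
rewrite (@eq_big_nat _ _ _ (off + 3^h) (off + 2 * 3^h) _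
   (fun j => ((a != c) && (maj_rec h (flip x j) (off + 3^h) != maj_rec h x (off + 3^h)) : nat))); last first.
  move=> j Hj.
  have E1 : ~~ (off <= j < off + 3^h) by lia.
  have E2 : ~~ (off + 2 * 3^h <= j < off + 2* 3^h + 3^h) by lia.
  by rewrite (flip_maj_out E1) (flip_maj_out E2) maj3_ch1 andbC.
rewrite (@eq_big_nat _ _ _ (off + 2 * 3^h) (off + 3^h.+1) _
   (fun j => ((a != b) && (maj_rec h (flip x j) (off + 2 * 3^h) != maj_rec h x (off + 2 * 3^h)) : nat))); last first.
  move=> j Hj.
  have E1 : ~~ (off <= j < off + 3^h) by lia.
  have E2 : ~~ (off + 3^h <= j < off + 3^h + 3^h) by lia.
  by rewrite (flip_maj_out E1) (flip_maj_out E2) maj3_ch2 andbC.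
rewrite !sum_andb_l IH // (_ : off + 2 * 3^h = off + 3^h + 3^h); last lia.
rewrite IH // (_ : off + 3^h.+1 = off + 3^h + 3^h + 3^h); last by rewrite expnS; lia.
rewrite IH; last by rewrite (_ : off + 3^h + 3^h = off + 2 * 3^h) //; lia.
rewrite expnS.
move: Hn; rewrite -/a -/b -/c; case: a b c => [] [] [] //= _; lia.
Qed.


Section CW.
Variable R : realType.
Local Open Scope ring_scope.

Fixpoint cw (h : nat) (x : nat -> bool) (off n : nat) : R :=
  match h with
  | 0 => (n == off)%:R
  | h'.+1 =>
    let a := maj_rec h' x off in
    let b := maj_rec h' x (off + 3^h') in
    let c := maj_rec h' x (off + 2 * 3^h') in
    if (n < off)%N then 0
    else if (n < off + 3^h')%N then (if (a == b) || (a == c) then cw h' x off n / 2 else 0)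
    else if (n < off + 2 * 3^h')%N then (if (a == b) || (a != c) then cw h' x (off + 3^h') n / 2 else 0)
    else if (n < off + 3 * 3^h')%N then (if a != b then cw h' x (off + 2 * 3^h') n / 2 else 0)
    else 0
  end.

Lemma cw_ge0 h x off n : 0 <= cw h x off n.
Proof.
elim: h off => [|h IH] off /=; first by rewrite ler0n.
by repeat case: ifP => _ //; rewrite divr_ge0.
Qed.

Lemma sum_if m n (b : bool) (F : nat -> R) :
  \sum_(m <= i < n) (if b then F i / 2 else 0) = if b then (\sum_(m <= i < n) F i) / 2 else 0.
Proof. by case: b; [rewrite -mulr_suml | rewrite big1]. Qed.

Lemma cw_sum h x off : \sum_(off <= n < off + 3^h) cw h x off n = 1.
Proof.
elim: h off => [|h IH] off.
  by rewrite expn0 addn1 big_nat1 /= eqxx.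
rewrite (@big_cat_nat _ _ _ (off + 3^h)) /=; [|lia|rewrite expnS; lia].
rewrite (@big_cat_nat _ _ _ (off + 2 * 3^h) (off + 3^h)) /=; [|lia|rewrite expnS; lia].
set a := maj_rec h x off; set b := maj_rec h x (off + 3^h); set c := maj_rec h x (off + 2 * 3^h).
rewrite (@eq_big_nat _ _ _ off (off + 3^h) _
   (fun n => if (a == b) || (a == c) then cw h x off n / 2 else 0)); last first.
  move=> n Hn.
  have -> : (n < off)%N = false by apply/negbTE/negP; lia.
  by have -> : (n < off + 3^h)%N = true by apply/idP; lia.
rewrite (@eq_big_nat _ _ _ (off + 3^h) (off + 2 * 3^h) _
   (fun n => if (a == b) || (a != c) then cw h x (off + 3^h) n / 2 else 0)); last first.
  move=> n Hn.
  have -> : (n < off)%N = false by apply/negbTE/negP; lia.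
  have -> : (n < off + 3^h)%N = false by apply/negbTE/negP; lia.
  by have -> : (n < off + 2 * 3^h)%N = true by apply/idP; lia.
rewrite (@eq_big_nat _ _ _ (off + 2 * 3^h) (off + 3^h.+1) _
   (fun n => if a != b then cw h x (off + 2 * 3^h) n / 2 else 0)); last first.
  move=> n Hn.
  have -> : (n < off)%N = false by apply/negbTE/negP; lia.
  have -> : (n < off + 3^h)%N = false by apply/negbTE/negP; lia.
  have -> : (n < off + 2 * 3^h)%N = false by apply/negbTE/negP; lia.
  by have -> : (n < off + 3 * 3^h)%N = true by apply/idP; rewrite expnS in Hn; lia.
rewrite !sum_if IH (_ : (off + 2 * 3^h = off + 3^h + 3^h)%N); last lia.
rewrite IH (_ : (off + 3^h.+1 = off + 3^h + 3^h + 3^h)%N); last by rewrite expnS; lia.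
rewrite IH.
by case: a b c => [] [] [] /=; field.
Qed.

Lemma maj3_pick a b c a' b' c' : maj3 a b c != maj3 a' b' c' ->
  [|| [&& (a == b) || (a == c), (a' == b') || (a' == c') & a != a'],
      [&& (a == b) || (a != c), (a' == b') || (a' != c') & b != b'] |
      [&& a != b, a' != b' & c != c']].
Proof. by case: a b c a' b' c' => [] [] [] [] [] []. Qed.

Lemma cw_cert h x y off : maj_rec h x off != maj_rec h y off ->
  exists n, [/\ (off <= n < off + 3^h)%N, x n != y n,
     (2^h)%:R^-1 <= cw h x off n & (2^h)%:R^-1 <= cw h y off n].
Proof.
elim: h off => [|h IH] off.
  move=> /= H; exists off; rewrite /= eqxx expn0 invr1; split => //; lia.
rewrite /=.
set a := maj_rec h x off; set b := maj_rec h x (off + 3^h); set c := maj_rec h x (off + 2 * 3^h).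
set a' := maj_rec h y off; set b' := maj_rec h y (off + 3^h); set c' := maj_rec h y (off + 2 * 3^h).
have hh : forall v : R, (2^h)%:R^-1 <= v -> (2^h.+1)%:R^-1 <= v / 2.
  move=> v Hv; rewrite expnS natrM invfM [X in X <= _]mulrC.
  by apply: ler_wpM2r => //; rewrite invr_ge0 ler0n.
move=> /maj3_pick /or3P [] /and3P [h1 h2 h3].
- have [n [Hn Hxy H1 H2]] := IH off h3.
  exists n; split => //; first by rewrite expnS; clear -Hn; lia.
  + have -> : (n < off)%N = false by apply/negbTE/negP; clear -Hn; lia.
    have -> : (n < off + 3^h)%N = true by apply/idP; clear -Hn; lia.
    by rewrite h1 hh.
  + have -> : (n < off)%N = false by apply/negbTE/negP; clear -Hn; lia.
    have -> : (n < off + 3^h)%N = true by apply/idP; clear -Hn; lia.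
    by rewrite h2 hh.
- have [n [Hn Hxy H1 H2]] := IH (off + 3^h)%N h3.
  exists n; split => //; first by rewrite expnS; clear -Hn; lia.
  + have -> : (n < off)%N = false by apply/negbTE/negP; clear -Hn; lia.
    have -> : (n < off + 3^h)%N = false by apply/negbTE/negP; clear -Hn; lia.
    have -> : (n < off + 2 * 3^h)%N = true by apply/idP; clear -Hn; lia.
    by rewrite h1 hh.
  + have -> : (n < off)%N = false by apply/negbTE/negP; clear -Hn; lia.
    have -> : (n < off + 3^h)%N = false by apply/negbTE/negP; clear -Hn; lia.
    have -> : (n < off + 2 * 3^h)%N = true by apply/idP; clear -Hn; lia.
    by rewrite h2 hh.
- have [n [Hn Hxy H1 H2]] := IH (off + 2 * 3^h)%N h3.
  exists n; split => //; first by rewrite expnS; clear -Hn; lia.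
  + have -> : (n < off)%N = false by apply/negbTE/negP; clear -Hn; lia.
    have -> : (n < off + 3^h)%N = false by apply/negbTE/negP; clear -Hn; lia.
    have -> : (n < off + 2 * 3^h)%N = false by apply/negbTE/negP; clear -Hn; lia.
    have -> : (n < off + 3 * 3^h)%N = true by apply/idP; clear -Hn; lia.
    by rewrite h1 hh.
  + have -> : (n < off)%N = false by apply/negbTE/negP; clear -Hn; lia.
    have -> : (n < off + 3^h)%N = false by apply/negbTE/negP; clear -Hn; lia.
    have -> : (n < off + 2 * 3^h)%N = false by apply/negbTE/negP; clear -Hn; lia.
    have -> : (n < off + 3 * 3^h)%N = true by apply/idP; clear -Hn; lia.
    by rewrite h2 hh.
Qed.

End CW.


Fixpoint hv h (v : bool) : nat -> bool :=
  match h with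
  | 0 => fun _ => v
  | h'.+1 => fun n => if n < 3^h' then hv h' v n
                     else if n < 2 * 3^h' then hv h' v (n - 3^h')
                     else hv h' (~~ v) (n - 2 * 3^h')
  end.

Lemma maj_shift h x k off : maj_rec h (fun n => x (n - k)) (k + off) = maj_rec h x off.
Proof.
elim: h off => [|h IH] off /=; first by rewrite addKn.
by rewrite -!addnA !IH.
Qed.

Lemma hard_shift h x k off : hardr h (fun n => x (n - k)) (k + off) = hardr h x off.
Proof.
elim: h off => [|h IH] off //=.
by rewrite -!addnA !IH !maj_shift.
Qed.

Lemma hv_prop h v : maj_rec h (hv h v) 0 = v /\ hardr h (hv h v) 0.
Proof.
elim: h v => [|h IH] v //=.
have e0 : maj_rec h (hv h.+1 v) 0 = maj_rec h (hv h v) 0.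
  apply: maj_rec_loc => n Hn /=; by have -> : n < 3^h by lia.
have f0 : hardr h (hv h.+1 v) 0 = hardr h (hv h v) 0.
  apply: hardr_loc => n Hn /=; by have -> : n < 3^h by lia.
have e1 : maj_rec h (hv h.+1 v) (0 + 3^h) = maj_rec h (hv h v) 0.
  rewrite -(maj_shift _ _ (3^h) 0) addn0 add0n; apply: maj_rec_loc => n Hn /=.
  have -> : (n < 3^h) = false by apply/negbTE/negP; lia.
  by have -> : n < 2 * 3^h by lia.
have f1 : hardr h (hv h.+1 v) (0 + 3^h) = hardr h (hv h v) 0.
  rewrite -(hard_shift _ _ (3^h) 0) addn0 add0n; apply: hardr_loc => n Hn /=.
  have -> : (n < 3^h) = false by apply/negbTE/negP; lia.
  by have -> : n < 2 * 3^h by lia.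
have e2 : maj_rec h (hv h.+1 v) (0 + 2 * 3^h) = maj_rec h (hv h (~~ v)) 0.
  rewrite -(maj_shift _ _ (2 * 3^h) 0) addn0 add0n; apply: maj_rec_loc => n Hn /=.
  have -> : (n < 3^h) = false by apply/negbTE/negP; lia.
  by have -> : (n < 2 * 3^h) = false by apply/negbTE/negP; lia.
have f2 : hardr h (hv h.+1 v) (0 + 2 * 3^h) = hardr h (hv h (~~ v)) 0.
  rewrite -(hard_shift _ _ (2 * 3^h) 0) addn0 add0n; apply: hardr_loc => n Hn /=.
  have -> : (n < 3^h) = false by apply/negbTE/negP; lia.
  by have -> : (n < 2 * 3^h) = false by apply/negbTE/negP; lia.
rewrite e0 e1 e2 f0 f1 f2.
have [m1 h1] := IH v; have [m2 h2] := IH (~~ v).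
rewrite m1 m2 h1 h2; by case: (v).
Qed.


Section Main.
Variables (R : realType) (h : nat).
Local Notation T := {ffun 'I_(3 ^ h) -> bool}.
Local Open Scope ring_scope.

Definition ext (x : T) : nat -> bool :=
  fun n => if insub n is Some i then x i else false.

Lemma ext_ord x (i : 'I_(3^h)) : ext x i = x i.
Proof. by rewrite /ext valK. Qed.

Definition flipf (x : T) (j : 'I_(3^h)) : T := [ffun k => if k == j then ~~ x k else x k].

Lemma ext_flip x j : ext (flipf x j) =1 flip (ext x) j.
Proof.
move=> n; rewrite /ext /flip; case: insubP => [i _ <-|Hn].
  by rewrite ffunE val_eqE.
case: eqP => // E; by rewrite E ltn_ord in Hn.
Qed.

Lemma MAJ_ext x : @MAJ h x = maj_rec h (ext x) 0.
Proof. by []. Qed.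

Lemma MAJ_flip x j : @MAJ h (flipf x j) = maj_rec h (flip (ext x) j) 0.
Proof. rewrite MAJ_ext; apply: maj_rec_loc => n _; exact: ext_flip. Qed.

Definition hardT (x : T) := hardr h (ext x) 0.

Definition Es (x : T) j := hardT x && (@MAJ h (flipf x j) != @MAJ h x).

Lemma flipfK x j : flipf (flipf x j) j = x.
Proof. apply/ffunP => k; rewrite !ffunE; case: eqP => // ->; by rewrite negbK. Qed.

Lemma Es_flip x j : Es x j -> Es (flipf x j) j.
Proof.
move=> /andP [Hh Hs]; apply/andP; split; last by rewrite flipfK eq_sym.
rewrite /hardT (hardr_loc _ _ (flip (ext x) j)); last by move=> n _; exact: ext_flip.
apply: sens_hard => //; by rewrite -MAJ_flip.
Qed.

Lemma Es_flip_eq x j : Es (flipf x j) j = Es x j.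
Proof. apply/idP/idP; last exact: Es_flip. by move/Es_flip; rewrite flipfK. Qed.

Lemma count_sens x : hardT x -> (\sum_(j < 3^h) (Es x j : nat) = 2^h)%N.
Proof.
move=> Hh; rewrite -(sens_count _ _ _ Hh) add0n big_mkord; apply: eq_bigr => j _.
by rewrite /Es Hh MAJ_flip.
Qed.

Lemma exists_hard : exists x, hardT x.
Proof.
exists [ffun i : 'I_(3^h) => hv h true i].
rewrite /hardT (hardr_loc _ _ (hv h true)); first by case: (hv_prop h true).
move=> n /andP [_ Hn]; rewrite add0n in Hn.
by rewrite /ext insubT ffunE.
Qed.

Lemma sum_const_cond (P : pred 'I_(3^h)) (c : R) :
  \sum_(j | P j) c = (\sum_j (P j : nat))%:R * c.
Proof.
rewrite big_mkcond natr_sum mulr_suml; apply: eq_bigr => j _.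
by case: (P j); rewrite /= ?mul1r ?mul0r.
Qed.

Lemma amgm (a b : R) : 0 <= a -> 0 <= b -> Num.sqrt (a * b) <= (a + b) / 2.
Proof.
move=> Ha Hb; rewrite sqrtrM //.
have ea := sqr_sqrtr Ha; have eb := sqr_sqrtr Hb.
have := sqr_ge0 (Num.sqrt a - Num.sqrt b).
move: ea eb; set sa := Num.sqrt a; set sb := Num.sqrt b => ea eb.
rewrite -ea -eb; nra.
Qed.

Let c : R := (2^h)%:R^-1.

Lemma c_gt0 : 0 < c.
Proof. by rewrite /c invr_gt0 ltr0n expn_gt0. Qed.

Lemma lower (p : T -> 'I_(3^h) -> R) : distr_family p ->
  exists x j, Es x j /\ Num.sqrt (p x j * p (flipf x j) j) <= c.
Proof.
move=> Hp.
have [//|Hall] := pselect (exists x j, Es x j /\ Num.sqrt (p x j * p (flipf x j) j) <= c).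
have Hlt : forall u : T * 'I_(3^h), Es u.1 u.2 -> c < Num.sqrt (p u.1 u.2 * p (flipf u.1 u.2) u.2).
  move=> u Hu; rewrite ltNge; apply/negP => Hle; apply: Hall; by exists u.1, u.2.
have [x0 Hx0] := exists_hard.
have [j0 Hj0] : exists j, Es x0 j.
  case/boolP: [exists j, Es x0 j] => [/existsP //|]; rewrite negb_exists => /forallP H; exfalso.
  have := count_sens _ Hx0; rewrite big1 => [|j _]; last by rewrite (negbTE (H j)).
  by move/eqP; rewrite eq_sym expn_eq0.
set Hs := \sum_(x : T) (hardT x)%:R : R.
have E1 : \sum_(u : T * 'I_(3^h) | Es u.1 u.2) c = Hs.
  rewrite -(pair_big_dep xpredT Es (fun _ _ => c)) /Hs; apply: eq_bigr => x _.
  rewrite sum_const_cond; case Hh : (hardT x); last first.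
    by rewrite big1 ?mul0r // => j _; rewrite /Es Hh.
  by rewrite count_sens // /c mulfV // pnatr_eq0 expn_eq0.
have E2 : \sum_(u : T * 'I_(3^h) | Es u.1 u.2) p u.1 u.2 <= Hs.
  rewrite -(pair_big_dep xpredT Es (fun x j => p x j)) /Hs; apply: ler_sum => x _.
  case Hh : (hardT x); last by rewrite big1 // => j; rewrite /Es Hh.
  have [H0 H1] := Hp x; rewrite -H1 [X in _ <= X](bigID (fun j => Es x j)) /= lerDl.
  by apply: sumr_ge0 => j _; apply: H0.
have E3 : \sum_(u : T * 'I_(3^h) | Es u.1 u.2) p (flipf u.1 u.2) u.2 =
          \sum_(u : T * 'I_(3^h) | Es u.1 u.2) p u.1 u.2.
  have inj : injective (fun u : T * 'I_(3^h) => (flipf u.1 u.2, u.2)).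
    apply: (can_inj (g := fun u : T * 'I_(3^h) => (flipf u.1 u.2, u.2))).
    by case=> x j /=; rewrite flipfK.
  rewrite [RHS](reindex_inj inj) /=; apply: eq_bigl => u; by rewrite Es_flip_eq.
have E4 : \sum_(u : T * 'I_(3^h) | Es u.1 u.2) Num.sqrt (p u.1 u.2 * p (flipf u.1 u.2) u.2)
     <= \sum_(u : T * 'I_(3^h) | Es u.1 u.2) p u.1 u.2.
  apply: le_trans (_ : \sum_(u : T * 'I_(3^h) | Es u.1 u.2) (p u.1 u.2 + p (flipf u.1 u.2) u.2) / 2 <= _).
    apply: ler_sum => u _; apply: amgm; [exact: (Hp _).1 | exact: (Hp _).1].
  rewrite -mulr_suml big_split /= E3; lra.
have E5 : \sum_(u : T * 'I_(3^h) | Es u.1 u.2) c <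
          \sum_(u : T * 'I_(3^h) | Es u.1 u.2) Num.sqrt (p u.1 u.2 * p (flipf u.1 u.2) u.2).
  apply: ltr_sum; last exact: Hlt.
  by apply/hasP; exists (x0, j0); rewrite ?mem_index_enum.
have := lt_le_trans E5 (le_trans E4 E2); by rewrite E1 ltxx.
Qed.

End Main.


Arguments ext {h}.
Arguments flipf {h}.
Arguments MAJ_ext {h}.
Arguments ext_ord {h}.
Arguments lower {R h} p.
Section Main2.
Variables (R : realType) (h : nat).
Local Notation T := {ffun 'I_(3 ^ h) -> bool}.
Local Open Scope ring_scope.

Let c : R := (2^h)%:R^-1.
Let c_gt0 : 0 < c.
Proof. by rewrite /c invr_gt0 ltr0n expn_gt0. Qed.

Definition p0 (x : T) (i : 'I_(3^h)) : R := cw R h (ext x) 0 i.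

Lemma p0_distr : distr_family p0.
Proof.
move=> x; split; first by move=> i; exact: cw_ge0.
have := cw_sum R h (ext x) 0; rewrite add0n big_mkord => <-.
by [].
Qed.

Lemma p0_cert x y : @MAJ h x != @MAJ h y ->
  exists i, [/\ x i != y i, c <= p0 x i & c <= p0 y i].
Proof.
rewrite !MAJ_ext => /(cw_cert R) [n [Hn Hxy H1 H2]].
rewrite add0n in Hn; have /andP [_ Hn'] := Hn.
exists (Ordinal Hn'); rewrite -!ext_ord /p0 /=; split => //.
Qed.

Lemma inv_e_le (s : R) : c <= s -> (inv_e s <= ((2^h)%:R)%:E)%E.
Proof.
move=> Hs; have s0 : 0 < s by exact: lt_le_trans c_gt0 Hs.
rewrite /inv_e (negbTE (lt0r_neq0 s0)) lee_fin.
have e : (2^h)%:R = c^-1 :> R by rewrite /c invrK.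
by rewrite e lef_pV2 ?posrE.
Qed.

Lemma inv_e_ge (s : R) : 0 <= s -> s <= c -> (((2^h)%:R)%:E <= inv_e s)%E.
Proof.
move=> H0 Hs; rewrite /inv_e; case: eqP => [_|/eqP sn0]; first exact: leey.
have s0 : 0 < s by rewrite lt0r sn0.
rewrite lee_fin.
have e : (2^h)%:R = c^-1 :> R by rewrite /c invrK.
by rewrite e lef_pV2 ?posrE.
Qed.

Lemma sqrt_ge (a b : R) : c <= a -> c <= b -> c <= Num.sqrt (a * b).
Proof.
move=> Ha Hb.
have -> : c = Num.sqrt (c * c) by rewrite -expr2 sqrtr_sqr ger0_norm // ltW.
rewrite ler_sqrt; last by apply: mulr_ge0; apply: le_trans (ltW c_gt0) _.
by apply: ler_pM => //; apply: ltW.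
Qed.

Lemma upper_sum : (pi_cost (@sum_overlap R (3^h)) (@MAJ h) p0 <= ((2^h)%:R)%:E)%E.
Proof.
apply: ge_ereal_sup => _ [x [y [Hf ->]]]; apply: inv_e_le.
have [i [Hi H1 H2]] := p0_cert _ _ Hf.
rewrite /sum_overlap (bigD1 i) //=; apply: le_trans (sqrt_ge _ _ H1 H2) _.
rewrite lerDl; apply: sumr_ge0 => k _; exact: sqrtr_ge0.
Qed.

Lemma upper_max : (pi_cost (@max_overlap R (3^h)) (@MAJ h) p0 <= ((2^h)%:R)%:E)%E.
Proof.
apply: ge_ereal_sup => _ [x [y [Hf ->]]]; apply: inv_e_le.
have [i [Hi H1 H2]] := p0_cert _ _ Hf.
apply: le_trans (sqrt_ge _ _ H1 H2) _; rewrite /max_overlap.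
exact: (le_bigmax_cond _ (P := fun k => x k != y k) (fun k => Num.sqrt (p0 x k * p0 y k)) Hi).
Qed.

Lemma lower_pair (p : T -> 'I_(3^h) -> R) : distr_family p ->
  exists x y, @MAJ h x != @MAJ h y /\
   (((2^h)%:R)%:E <= inv_e (sum_overlap p x y))%E /\
   (((2^h)%:R)%:E <= inv_e (max_overlap p x y))%E.
Proof.
move=> Hp; have [x [j [HE Hle]]] := lower _ Hp.
exists x, (flipf x j); split; first by case/andP: HE => _; rewrite eq_sym.
have Hd : forall i, (x i != flipf x j i) = (i == j).
  by move=> i; rewrite ffunE; case: (i == j); case: (x i).
have s0 : 0 <= Num.sqrt (p x j * p (flipf x j) j) by exact: sqrtr_ge0.
split.
  rewrite /sum_overlap (big_pred1 j); last by move=> i; rewrite /= Hd.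
  exact: inv_e_ge _ s0 Hle.
apply: inv_e_ge.
  apply: le_trans s0 _.
  have Pj : x j != flipf x j j by rewrite Hd eqxx.
  exact: (@le_bigmax_cond _ _ _ 0 j (fun k => x k != flipf x j k) (fun k => Num.sqrt (p x k * p (flipf x j) k)) Pj).
apply/bigmax_leP; split; first exact: ltW.
by move=> i; rewrite Hd => /eqP ->.
Qed.

End Main2.

Local Open Scope ring_scope.

Theorem mainTheorem14 (R : realType) (h : nat) (hh : (1 <= h)%N) :
  @sumPI R (3 ^ h) (@MAJ h) = ((2 ^ h)%:R)%:E /\
  @maxPI R (3 ^ h) (@MAJ h) = ((2 ^ h)%:R)%:E.
Proof.
split; apply/le_anti/andP; split.
- apply: le_trans (upper_sum R h); apply: ereal_inf_lbound; exists (p0 R h) => //.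
  exact: p0_distr.
- apply: le_ereal_inf_tmp => _ [p Hp <-].
  have [x [y [Hf [H1 H2]]]] := lower_pair _ _ _ Hp.
  apply: le_trans H1 _; apply: ereal_sup_ubound; exists x, y; split => //.
- apply: le_trans (upper_max R h); apply: ereal_inf_lbound; exists (p0 R h) => //.
  exact: p0_distr.
- apply: le_ereal_inf_tmp => _ [p Hp <-].
  have [x [y [Hf [H1 H2]]]] := lower_pair _ _ _ Hp.
  apply: le_trans H2 _; apply: ereal_sup_ubound; exists x, y; split => //.
Qed.
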